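(* Let $(N,J,h)$ be a 2-dimensional almost Norden manifold of constant sectional curvature $k'$ and let $(\mathcal{C}(N),\varphi,\xi,\eta,g)$ be the cone over it (constructed as in the context). Then for $(\mathcal{C}(N),\varphi,\xi,\eta,g)$: (1) the sectional curvatures of all non-degenerate $\xi$-sections vanish; (2) $\tau^*=0$; (3) $\tau^{**}=\tau$.
   Context: An almost Norden manifold $(N,J,h)$ is a manifold $N$ with an almost complex structure $J$ and a pseudo-Riemannian metric $h$ satisfying $h(Jx,Jy)=-h(x,y)$; constant sectional curvature $k'$ means its curvature tensor is $R'(x,y,z,w)=k'\{h(y,z)h(x,w)-h(x,z)h(y,w)\}$. The cone is $\mathcal{C}(N)=\mathbb{R}^+\times N$, $t$ the coordinate on $\mathbb{R}^+=(0,\infty)$, with metric $g=t^2h+\mathrm{d}t^2$ and structure $\xi=\tfrac{\mathrm{d}}{\mathrm{d}t}$, $\eta=\mathrm{d}t$, $\varphi=J$ on vectors tangent to $N$, $\varphi\xi=0$. Let $\nabla$ be the Levi-Civita connection of $g$, $R(x,y)=\nabla_x\nabla_y-\nabla_y\nabla_x-\nabla_{[x,y]}$, $R(x,y,z,w)=g(R(x,y)z,w)$. For a basis $\{e_i\}$ with $(g^{ij})$ the inverse of $(g(e_i,e_j))$ (summation convention): $\rho(y,z)=g^{ij}R(e_i,y,z,e_j)$, $\rho^*(y,z)=g^{ij}R(e_i,y,z,\varphi e_j)$, $\tau=g^{ij}\rho(e_i,e_j)$, $\tau^*=g^{ij}\rho^*(e_i,e_j)$, $\tau^{**}=g^{ij}\rho^*(e_i,\varphi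 e_j)$. The sectional curvature of a non-degenerate 2-plane $\alpha$ with orthogonal basis $\{x,y\}$ is $k(\alpha)=R(x,y,y,x)/(g(x,x)g(y,y))$; $\alpha$ is a $\xi$-section if $\xi\in\alpha$. *)

(* Defs.v *)
From HB Require Import structures.
From mathcomp Require Import all_boot all_order all_algebra.
From mathcomp Require Import all_classical all_reals all_analysis.
Set Implicit Arguments. Unset Strict Implicit. Unset Printing Implicit Defensive.
Import Order.TTheory GRing.Theory Num.Theory.
Import numFieldNormedType.Exports.
Local Open Scope ring_scope.

Definition ev {R : realType} {n : nat} (i : 'I_n) : 'rV[R]_n := delta_mx 0 i.

Definition pd {R : realType} {n : nat} (i : 'I_n) (f : 'rV[R]_n -> R)
  (x : 'rV[R]_n) : R := derive f x (ev i).

Fixpoint Ck {R : realType} {n : nat} (k : nat) (f : 'rV[R]_n -> R) : Prop :=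
  continuous f /\
  match k with
  | 0 => True
  | k'.+1 => forall i : 'I_n, (forall x, derivable f x (ev i)) /\ Ck k' (pd i f)
  end.
Definition smooth {R : realType} {n : nat} (f : 'rV[R]_n -> R) : Prop :=
  forall k, Ck k f.

Definition metric {R : realType} {n : nat} (G : 'rV[R]_n -> 'M[R]_n)
  (x u v : 'rV[R]_n) : R :=
  \sum_(i < n) \sum_(j < n) u 0 i * G x i j * v 0 j.

Definition christ {R : realType} {n : nat} (G : 'rV[R]_n -> 'M[R]_n)
  (m j k : 'I_n) (x : 'rV[R]_n) : R :=
  2^-1 * \sum_(l < n) (invmx (G x)) m l *
    (pd j (fun y => G y l k) x + pd k (fun y => G y l j) x
     - pd l (fun y => G y j k) x).

(* R(d_i,d_j)d_k = Rup^m_{ijk} d_m, with R(X,Y) = nabla_X nabla_Y - nabla_Y nabla_X - nabla_[X,Y] *)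
Definition Rup {R : realType} {n : nat} (G : 'rV[R]_n -> 'M[R]_n)
  (m i j k : 'I_n) (x : 'rV[R]_n) : R :=
  pd i (christ G m j k) x - pd j (christ G m i k) x
  + \sum_(l < n) (christ G l j k x * christ G m i l x
                  - christ G l i k x * christ G m j l x).

Definition Rlow {R : realType} {n : nat} (G : 'rV[R]_n -> 'M[R]_n)
  (i j k w : 'I_n) (x : 'rV[R]_n) : R :=
  \sum_(m < n) G x m w * Rup G m i j k x.

Definition curv {R : realType} {n : nat} (G : 'rV[R]_n -> 'M[R]_n)
  (x X Y Z W : 'rV[R]_n) : R :=
  \sum_(i < n) \sum_(j < n) \sum_(k < n) \sum_(l < n)
    X 0 i * Y 0 j * Z 0 k * W 0 l * Rlow G i j k l x.

Definition phiv {R : realType} {n : nat} (P : 'M[R]_n) (v : 'rV[R]_n) : 'rV[R]_n :=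
  \row_(i < n) \sum_(j < n) P i j * v 0 j.

Definition ricci {R : realType} {n : nat} (G : 'rV[R]_n -> 'M[R]_n)
  (x y z : 'rV[R]_n) : R :=
  \sum_(i < n) \sum_(j < n) (invmx (G x)) i j * curv G x (ev i) y z (ev j).

Definition ricci_star {R : realType} {n : nat} (G Phi : 'rV[R]_n -> 'M[R]_n)
  (x y z : 'rV[R]_n) : R :=
  \sum_(i < n) \sum_(j < n)
    (invmx (G x)) i j * curv G x (ev i) y z (phiv (Phi x) (ev j)).

Definition scal_tau {R : realType} {n : nat} (G : 'rV[R]_n -> 'M[R]_n)
  (x : 'rV[R]_n) : R :=
  \sum_(i < n) \sum_(j < n) (invmx (G x)) i j * ricci G x (ev i) (ev j).

Definition tau_star {R : realType} {n : nat} (G Phi : 'rV[R]_n -> 'M[R]_n)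
  (x : 'rV[R]_n) : R :=
  \sum_(i < n) \sum_(j < n) (invmx (G x)) i j * ricci_star G Phi x (ev i) (ev j).

Definition tau_star2 {R : realType} {n : nat} (G Phi : 'rV[R]_n -> 'M[R]_n)
  (x : 'rV[R]_n) : R :=
  \sum_(i < n) \sum_(j < n)
    (invmx (G x)) i j * ricci_star G Phi x (ev i) (phiv (Phi x) (ev j)).

(* sectional curvature of the plane spanned by an orthogonal basis {u, v} *)
Definition sectional {R : realType} {n : nat} (G : 'rV[R]_n -> 'M[R]_n)
  (x u v : 'rV[R]_n) : R :=
  curv G x u v v u / (metric G x u u * metric G x v v).

(* almost Norden structure (J, h) on a coordinate chart R^2 of N *)
Definition almost_norden {R : realType} (J h : 'rV[R]_2 -> 'M[R]_2) : Prop :=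
  (forall i j, smooth (fun x => J x i j)) /\
  (forall i j, smooth (fun x => h x i j)) /\
  (forall x, J x *m J x = - 1%:M) /\
  (forall x, (h x)^T = h x) /\
  (forall x, h x \in unitmx) /\
  (forall x u v, metric h x (phiv (J x) u) (phiv (J x) v) = - metric h x u v).

Definition constant_sectional_curvature {R : realType}
  (h : 'rV[R]_2 -> 'M[R]_2) (k' : R) : Prop :=
  forall x X Y Z W, curv h x X Y Z W =
    k' * (metric h x Y Z * metric h x X W - metric h x X Z * metric h x Y W).

(* The cone C(N) = R^+ x N in coordinates (t, p): coordinate 0 is t. *)
Definition cone_t {R : realType} (X : 'rV[R]_(1 + 2)) : R := X 0 (lshift 2 ord0).
Definition cone_metric {R : realType} (h : 'rV[R]_2 -> 'M[R]_2)
  (X : 'rV[R]_(1 + 2)) : 'M[R]_(1 + 2) :=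
  block_mx 1%:M 0 0 ((cone_t X ^+ 2) *: h (rsubmx X)).
Definition cone_phi {R : realType} (J : 'rV[R]_2 -> 'M[R]_2)
  (X : 'rV[R]_(1 + 2)) : 'M[R]_(1 + 2) :=
  block_mx 0 0 0 (J (rsubmx X)).
Definition cone_xi {R : realType} : 'rV[R]_(1 + 2) := row_mx (const_mx 1) 0.

(* Main.v *)
Require Import Defs.
From HB Require Import structures.
From mathcomp Require Import all_boot all_order all_algebra.
From mathcomp Require Import all_classical all_reals all_analysis.
From mathcomp Require Import ring lra.
Import Order.TTheory GRing.Theory Num.Theory.
Import numFieldNormedType.Exports.
Local Open Scope ring_scope.
Set Implicit Arguments. Unset Strict Implicit. Unset Printing Implicit Defensive.


Section Gen.
Variable R : realType.

Lemma evE n (i j : 'I_n) : (ev i : 'rV[R]_n) 0 j = (i == j)%:R.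
Proof. by rewrite /ev mxE eqxx andTb eq_sym. Qed.

Lemma sum_delta n (i : 'I_n) (F : 'I_n -> R) : \sum_(j < n) (i == j)%:R * F j = F i.
Proof.
rewrite (bigD1 i) //= eqxx mul1r big1 ?addr0 // => j /negbTE.
by rewrite eq_sym => ->; rewrite mul0r.
Qed.

Lemma sum_delta' n (i : 'I_n) (F : 'I_n -> R) : \sum_(j < n) F j * (i == j)%:R = F i.
Proof. by rewrite -[RHS](sum_delta i); apply: eq_bigr => j _; rewrite mulrC. Qed.

Lemma sum_only n (i : 'I_n) (F : 'I_n -> R) :
  (forall j, j != i -> F j = 0) -> \sum_(j < n) F j = F i.
Proof. by move=> H; rewrite (bigD1 i) //= big1 ?addr0 // => j /H. Qed.

Lemma curv_ev2 n (G : 'rV[R]_n -> 'M[R]_n) x (i j : 'I_n) Z W :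
  curv G x (ev i) (ev j) Z W =
  \sum_(k < n) \sum_(l < n) Z 0 k * W 0 l * Rlow G i j k l x.
Proof.
rewrite /curv (@sum_only _ i); last first.
  move=> a /negbTE ai; apply: big1 => b _; apply: big1 => c _; apply: big1 => d _.
  by rewrite evE eq_sym ai !mul0r.
rewrite (@sum_only _ j); last first.
  move=> b /negbTE bj; apply: big1 => c _; apply: big1 => d _.
  by rewrite (evE j) eq_sym bj mulr0 !mul0r.
apply: eq_bigr => k _; apply: eq_bigr => l _.
by rewrite !evE !eqxx !mul1r.
Qed.

Lemma curv_ev n (G : 'rV[R]_n -> 'M[R]_n) x (i j k l : 'I_n) :
  curv G x (ev i) (ev j) (ev k) (ev l) = Rlow G i j k l x.
Proof.
rewrite curv_ev2 (@sum_only _ k); last first.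
  by move=> a /negbTE ai; apply: big1 => b _; rewrite evE eq_sym ai !mul0r.
rewrite (@sum_only _ l); last first.
  by move=> a /negbTE ai; rewrite (evE l) eq_sym ai mulr0 mul0r.
by rewrite !evE !eqxx !mul1r.
Qed.

Lemma metric_ev n (G : 'rV[R]_n -> 'M[R]_n) x (i j : 'I_n) :
  metric G x (ev i) (ev j) = G x i j.
Proof.
rewrite /metric (@sum_only _ i); last first.
  by move=> a /negbTE ai; apply: big1 => b _; rewrite evE eq_sym ai !mul0r.
rewrite (@sum_only _ j); last first.
  by move=> a /negbTE ai; rewrite (evE j) eq_sym ai mulr0.
by rewrite !evE !eqxx mul1r mulr1.
Qed.

Lemma phiv_ev n (P : 'M[R]_n) (j m : 'I_n) : phiv P (ev j) 0 m = P m j.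
Proof. by rewrite /phiv mxE; under eq_bigr => a _ do rewrite evE; rewrite sum_delta'. Qed.

End Gen.


Section Cone.
Variable R : realType.
Notation o := (lshift 2 (ord0 : 'I_1)).
Notation r := (rshift 1).

Lemma ord3P (i : 'I_(1+2)) : i = o \/ exists a, i = r a.
Proof.
case: (splitP i) => [j ij|a ij]; [left|right; exists a]; apply/val_inj => //=.
by rewrite ij; case: j ij => [[]].
Qed.

Lemma ro_neq (a : 'I_2) : (r a == o) = false.
Proof. by apply/negbTE; apply/eqP => /(congr1 val). Qed.
Lemma or_neq (a : 'I_2) : (o == r a) = false.
Proof. by rewrite eq_sym ro_neq. Qed.
Lemma rr_eq (a b : 'I_2) : (r a == r b) = (a == b).
Proof. by apply/eqP/eqP => [/rshift_inj|->]. Qed.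
Lemma oo_eq : (o == o) = true.
Proof. exact: eqxx. Qed.

Lemma cone_t_o (s : R) (y : 'rV[R]_(1+2)) : cone_t (s *: ev o + y) = s + cone_t y.
Proof. by rewrite /cone_t !mxE !eqxx mulr1. Qed.

Lemma rsub_o (s : R) (y : 'rV[R]_(1+2)) : rsubmx (s *: ev o + y) = rsubmx y.
Proof. by apply/rowP => j; rewrite !mxE eqxx ro_neq mulr0 add0r. Qed.

Lemma cone_t_r (s : R) a (y : 'rV[R]_(1+2)) : cone_t (s *: ev (r a) + y) = cone_t y.
Proof. by rewrite /cone_t !mxE eqxx or_neq mulr0 add0r. Qed.

Lemma rsub_r (s : R) a (y : 'rV[R]_(1+2)) : rsubmx (s *: ev (r a) + y) = s *: ev a + rsubmx y.
Proof. by apply/rowP => j; rewrite !mxE rr_eq. Qed.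

Lemma pdH (F : R -> 'rV[R]_2 -> R) a (y : 'rV[R]_(1+2)) :
  pd (r a) (fun z => F (cone_t z) (rsubmx z)) y = pd a (F (cone_t y)) (rsubmx y).
Proof.
rewrite /pd /derive; do 2 f_equal; apply/funext => s /=.
by rewrite cone_t_r rsub_r.
Qed.

Lemma pdT (F : R -> 'rV[R]_2 -> R) (y : 'rV[R]_(1+2)) :
  pd o (fun z => F (cone_t z) (rsubmx z)) y =
  derive (fun s => F s (rsubmx y)) (cone_t y) 1.
Proof.
rewrite /pd /derive; do 2 f_equal; apply/funext => s /=.
by rewrite cone_t_o rsub_o /GRing.scale /= mulr1.
Qed.

Lemma d_sq (K t : R) : derive (fun s : R => s ^+ 2 * K) t 1 = 2 * t * K.
Proof.
have -> : (fun s : R => s ^+ 2 * K) = ((@id R) * (@id R)) * cst K.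
  by apply/funext => s /=; rewrite expr2.
have di := @derivable_id R R t 1.
rewrite (deriveM (derivableM di di) (derivable_cst K t 1)).
rewrite (deriveM di di) derive_id derive_cst /= scaler0 add0r.
rewrite /GRing.scale /=. ring.
Qed.
Lemma d_inv (t : R) : t != 0 -> derive (fun s : R => s^-1) t 1 = - t^-2.
Proof.
move=> t0.
have di := @derivable_id R R t 1.
rewrite (@deriveV _ _ id t 1 t0 di) derive_id /GRing.scale /= mulr1 //.
Qed.
Lemma d_lin (K t : R) : derive (fun s : R => s * K) t 1 = K.
Proof.
have -> : (fun s : R => s * K) = (@id R) * cst K by [].
have di := @derivable_id R R t 1.
rewrite (deriveM di (derivable_cst K t 1)) derive_id derive_cst /= scaler0 add0r.
by rewrite /GRing.scale /= mulr1.
Qed.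

Lemma d_cst (K t : R) : derive (fun s : R => K) t 1 = 0.
Proof. exact: derive_cst. Qed.

Lemma pdZ n (i : 'I_n) (f : 'rV[R]_n -> R) (K : R) x :
  derivable f x (ev i) -> pd i (fun q => K * f q) x = K * pd i f x.
Proof. move=> d; rewrite /pd -(deriveMl K d); by []. Qed.

Lemma pd_cst n (i : 'I_n) (K : R) x : pd i (fun _ : 'rV[R]_n => K) x = 0.
Proof. exact: derive_cst. Qed.

Lemma sum3 (F : 'I_(1+2) -> R) : \sum_(l < 1+2) F l = F o + \sum_(a < 2) F (r a).
Proof. by rewrite big_split_ord big_ord1. Qed.

Lemma sum2 (F : 'I_2 -> R) : \sum_(l < 2) F l = F 0 + F 1.
Proof. rewrite big_ord_recl big_ord1; congr (_ + F _); exact: val_inj. Qed.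

Lemma near_pos (X : 'rV[R]_(1+2)) : 0 < cone_t X -> \forall z \near X, 0 < cone_t z.
Proof.
move=> tX; have hc := @coord_continuous R 1 (1+2) 0 o X.
have nb : nbhs (cone_t X) (fun x : R => 0 < x).
  by apply: open_nbhs_nbhs; split => //; exact: open_gt.
exact: (hc _ nb).
Qed.

End Cone.


Section Chr.
Variable R : realType.
Variable h : 'rV[R]_2 -> 'M[R]_2.
Hypothesis hsym : forall x, (h x)^T = h x.
Hypothesis hunit : forall x, h x \in unitmx.
Hypothesis hder : forall (a b c : 'I_2) x, derivable (fun q => h q a b) x (ev c).
Notation o := (lshift 2 (ord0 : 'I_1)).
Notation r := (rshift 1).
Notation G := (cone_metric h).

Lemma G_oo z : G z o o = 1.
Proof. by rewrite /cone_metric block_mxEul mxE. Qed.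
Lemma G_or z a : G z o (r a) = 0.
Proof. by rewrite /cone_metric block_mxEur mxE. Qed.
Lemma G_ro z a : G z (r a) o = 0.
Proof. by rewrite /cone_metric block_mxEdl mxE. Qed.
Lemma G_rr z a b : G z (r a) (r b) = cone_t z ^+ 2 * h (rsubmx z) a b.
Proof. by rewrite /cone_metric block_mxEdr mxE. Qed.

Lemma pdG_oo i y : pd i (fun z => G z o o) y = 0.
Proof. by rewrite (_ : (fun z => _) = fun _ => 1) ?pd_cst //; apply/funext => z; rewrite G_oo. Qed.
Lemma pdG_or i a y : pd i (fun z => G z o (r a)) y = 0.
Proof. by rewrite (_ : (fun z => _) = fun _ => 0) ?pd_cst //; apply/funext => z; rewrite G_or. Qed.
Lemma pdG_ro i a y : pd i (fun z => G z (r a) o) y = 0.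
Proof. by rewrite (_ : (fun z => _) = fun _ => 0) ?pd_cst //; apply/funext => z; rewrite G_ro. Qed.
Lemma pdG_rr_o a b y :
  pd o (fun z => G z (r a) (r b)) y = 2 * cone_t y * h (rsubmx y) a b.
Proof.
have e := pdT (fun s p => s ^+ 2 * h p a b) y; simpl in e.
rewrite (_ : (fun z => _) = fun z => cone_t z ^+ 2 * h (rsubmx z) a b).
  by rewrite e d_sq.
by apply/funext => z; rewrite G_rr.
Qed.
Lemma pdG_rr_r c a b y :
  pd (r c) (fun z => G z (r a) (r b)) y =
  cone_t y ^+ 2 * pd c (fun q => h q a b) (rsubmx y).
Proof.
have e := pdH (fun s p => s ^+ 2 * h p a b) c y; simpl in e.
rewrite (_ : (fun z => _) = fun z => cone_t z ^+ 2 * h (rsubmx z) a b).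
  by rewrite e pdZ.
by apply/funext => z; rewrite G_rr.
Qed.

Lemma invG y : cone_t y != 0 ->
  invmx (G y) = block_mx 1 0 0 ((cone_t y)^-2 *: invmx (h (rsubmx y))).
Proof.
move=> t0.
have u : (cone_t y ^+ 2 *: h (rsubmx y)) \in unitmx.
  by rewrite unitmxZ ?hunit // unitfE expf_neq0.
rewrite /cone_metric invmx_block_diag ?invmx1 ?invmxZ //.
by rewrite block_diag_mx_unit unitmx1 u.
Qed.

Lemma Gi_oo y : cone_t y != 0 -> invmx (G y) o o = 1.
Proof. by move=> t0; rewrite invG // block_mxEul mxE. Qed.
Lemma Gi_or y a : cone_t y != 0 -> invmx (G y) o (r a) = 0.
Proof. by move=> t0; rewrite invG // block_mxEur mxE. Qed.
Lemma Gi_ro y a : cone_t y != 0 -> invmx (G y) (r a) o = 0.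
Proof. by move=> t0; rewrite invG // block_mxEdl mxE. Qed.
Lemma Gi_rr y a b : cone_t y != 0 ->
  invmx (G y) (r a) (r b) = (cone_t y)^-2 * invmx (h (rsubmx y)) a b.
Proof. by move=> t0; rewrite invG // block_mxEdr mxE. Qed.


Lemma hHi x (c b : 'I_2) : \sum_(d < 2) invmx (h x) c d * h x d b = (c == b)%:R.
Proof. by have := mulVmx (hunit x); move/matrixP => /(_ c b); rewrite !mxE. Qed.

Lemma Hhi x (a b : 'I_2) : \sum_(d < 2) h x a d * invmx (h x) d b = (a == b)%:R.
Proof. by have := mulmxV (hunit x); move/matrixP => /(_ a b); rewrite !mxE. Qed.

Lemma hs x a b : h x a b = h x b a.
Proof. by rewrite -{1}hsym mxE. Qed.

Ltac zG := rewrite ?pdG_oo ?pdG_or ?pdG_ro.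

Lemma chr_ooo y : cone_t y != 0 -> christ G o o o y = 0.
Proof.
move=> t0; rewrite /christ sum3 Gi_oo // big1 => [|d _]; last by rewrite Gi_or // mul0r.
by zG; rewrite !addr0 subr0 mulr0 mulr0.
Qed.

Lemma chr_oor y b : cone_t y != 0 -> christ G o o (r b) y = 0.
Proof.
move=> t0; rewrite /christ sum3 Gi_oo // big1 => [|d _]; last by rewrite Gi_or // mul0r.
by zG; rewrite addr0 add0r subrr mulr0 mulr0.
Qed.

Lemma chr_oro y a : cone_t y != 0 -> christ G o (r a) o y = 0.
Proof.
move=> t0; rewrite /christ sum3 Gi_oo // big1 => [|d _]; last by rewrite Gi_or // mul0r.
by zG; rewrite add0r subrr mulr0 addr0 mulr0.
Qed.

Lemma chr_orr y a b : cone_t y != 0 ->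
  christ G o (r a) (r b) y = - (cone_t y * h (rsubmx y) a b).
Proof.
move=> t0; rewrite /christ sum3 Gi_oo // big1 => [|d _]; last by rewrite Gi_or // mul0r.
zG; rewrite pdG_rr_o; by field.
Qed.

Lemma chr_roo y c : cone_t y != 0 -> christ G (r c) o o y = 0.
Proof.
move=> t0; rewrite /christ sum3 Gi_ro // mul0r add0r big1 ?mulr0 // => d _.
by zG; rewrite addr0 subr0 mulr0.
Qed.

Lemma chr_ror y c b : cone_t y != 0 ->
  christ G (r c) o (r b) y = (cone_t y)^-1 * (c == b)%:R.
Proof.
move=> t0; rewrite /christ sum3 Gi_ro // mul0r add0r -(hHi (rsubmx y)) big_distrr /=.
rewrite big_distrr /=; apply: eq_bigr => d _.
zG; rewrite Gi_rr // pdG_rr_o; by field.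
Qed.

Lemma chr_rro y c a : cone_t y != 0 ->
  christ G (r c) (r a) o y = (cone_t y)^-1 * (c == a)%:R.
Proof.
move=> t0; rewrite /christ sum3 Gi_ro // mul0r add0r -(hHi (rsubmx y)) big_distrr /=.
rewrite big_distrr /=; apply: eq_bigr => d _.
zG; rewrite Gi_rr // pdG_rr_o; by field.
Qed.

Lemma chr_rrr y c a b : cone_t y != 0 ->
  christ G (r c) (r a) (r b) y = christ h c a b (rsubmx y).
Proof.
move=> t0; rewrite /christ sum3 Gi_ro // mul0r add0r; congr (_ * _).
apply: eq_bigr => d _.
rewrite Gi_rr // !pdG_rr_r; by field.
Qed.

End Chr.


Lemma d_invK (R : realType) (K t : R) : t != 0 ->
  derive (fun s : R => s^-1 * K) t 1 = - t^-2 * K.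
Proof.
move=> t0.
have di := @derivable_id R R t 1.
have dv := @derivableV _ _ id t 1 t0 di.
have -> : (fun s : R => s^-1 * K) = (fun s : R => (id s)^-1) * cst K by [].
rewrite (deriveM dv (derivable_cst K t 1)) derive_cst scaler0 add0r.
rewrite (@deriveV _ _ id t 1 t0 di) derive_id /GRing.scale /=; ring.
Qed.

Section PdChr.
Variable R : realType.
Variable h : 'rV[R]_2 -> 'M[R]_2.
Hypothesis hsym : forall x, (h x)^T = h x.
Hypothesis hunit : forall x, h x \in unitmx.
Hypothesis hder : forall (a b c : 'I_2) x, derivable (fun q => h q a b) x (ev c).
Notation o := (lshift 2 (ord0 : 'I_1)).
Notation r := (rshift 1).
Notation G := (cone_metric h).
Variable X : 'rV[R]_(1+2).
Hypothesis tX : 0 < cone_t X.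

Lemma pdc_near m j k F i :
  (forall z, cone_t z != 0 -> christ G m j k z = F z) ->
  pd i (christ G m j k) X = pd i F X.
Proof.
move=> e; apply: near_eq_derive; apply: filterS (near_pos tX) => z zp.
by apply: e; rewrite gt_eqF.
Qed.

Lemma pdc_ooo i : pd i (christ G o o o) X = 0.
Proof. by rewrite (@pdc_near _ _ _ (fun _ => 0)) ?pd_cst // => z; apply: chr_ooo. Qed.
Lemma pdc_oor i b : pd i (christ G o o (r b)) X = 0.
Proof. by rewrite (@pdc_near _ _ _ (fun _ => 0)) ?pd_cst // => z; apply: chr_oor. Qed.
Lemma pdc_oro i a : pd i (christ G o (r a) o) X = 0.
Proof. by rewrite (@pdc_near _ _ _ (fun _ => 0)) ?pd_cst // => z; apply: chr_oro. Qed.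
Lemma pdc_roo i c : pd i (christ G (r c) o o) X = 0.
Proof. by rewrite (@pdc_near _ _ _ (fun _ => 0)) ?pd_cst // => z; apply: chr_roo. Qed.

Lemma pdc_orr_o a b : pd o (christ G o (r a) (r b)) X = - h (rsubmx X) a b.
Proof.
rewrite (@pdc_near _ _ _ (fun z => (fun s p => s * - h p a b) (cone_t z) (rsubmx z))).
  by rewrite (pdT (fun s p => s * - h p a b)) d_lin.
by move=> z z0; rewrite chr_orr // mulrN.
Qed.


Lemma pdc_orr_r c a b : pd (r c) (christ G o (r a) (r b)) X =
  - cone_t X * pd c (fun q => h q a b) (rsubmx X).
Proof.
rewrite (@pdc_near _ _ _ (fun z => (fun s p => - s * h p a b) (cone_t z) (rsubmx z))).
  by rewrite (pdH (fun s p => - s * h p a b)) pdZ.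
by move=> z z0; rewrite chr_orr // mulNr.
Qed.

Lemma pdc_ror_o c b : pd o (christ G (r c) o (r b)) X = - (cone_t X)^-2 * (c == b)%:R.
Proof.
rewrite (@pdc_near _ _ _ (fun z => (fun s (p : 'rV[R]_2) => s^-1 * (c == b)%:R) (cone_t z) (rsubmx z))).
  by rewrite (pdT (fun s (p : 'rV[R]_2) => s^-1 * (c == b)%:R)) d_invK // gt_eqF.
by move=> z z0; rewrite chr_ror.
Qed.

Lemma pdc_ror_r d c b : pd (r d) (christ G (r c) o (r b)) X = 0.
Proof.
rewrite (@pdc_near _ _ _ (fun z => (fun s (p : 'rV[R]_2) => s^-1 * (c == b)%:R) (cone_t z) (rsubmx z))).
  by rewrite (pdH (fun s (p : 'rV[R]_2) => s^-1 * (c == b)%:R)) pd_cst.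
by move=> z z0; rewrite chr_ror.
Qed.

Lemma pdc_rro_o c a : pd o (christ G (r c) (r a) o) X = - (cone_t X)^-2 * (c == a)%:R.
Proof.
rewrite (@pdc_near _ _ _ (fun z => (fun s (p : 'rV[R]_2) => s^-1 * (c == a)%:R) (cone_t z) (rsubmx z))).
  by rewrite (pdT (fun s (p : 'rV[R]_2) => s^-1 * (c == a)%:R)) d_invK // gt_eqF.
by move=> z z0; rewrite chr_rro.
Qed.

Lemma pdc_rro_r d c a : pd (r d) (christ G (r c) (r a) o) X = 0.
Proof.
rewrite (@pdc_near _ _ _ (fun z => (fun s (p : 'rV[R]_2) => s^-1 * (c == a)%:R) (cone_t z) (rsubmx z))).
  by rewrite (pdH (fun s (p : 'rV[R]_2) => s^-1 * (c == a)%:R)) pd_cst.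
by move=> z z0; rewrite chr_rro.
Qed.

Lemma pdc_rrr_o c a b : pd o (christ G (r c) (r a) (r b)) X = 0.
Proof.
rewrite (@pdc_near _ _ _ (fun z => (fun (s : R) p => christ h c a b p) (cone_t z) (rsubmx z))).
  by rewrite (pdT (fun (s : R) p => christ h c a b p)) d_cst.
by move=> z z0; rewrite chr_rrr.
Qed.

Lemma pdc_rrr_r d c a b : pd (r d) (christ G (r c) (r a) (r b)) X =
  pd d (christ h c a b) (rsubmx X).
Proof.
rewrite (@pdc_near _ _ _ (fun z => (fun (s : R) p => christ h c a b p) (cone_t z) (rsubmx z))).
  by rewrite (pdH (fun (s : R) p => christ h c a b p)).
by move=> z z0; rewrite chr_rrr.
Qed.

End PdChr.


Section RupC.
Variable R : realType.
Variable h : 'rV[R]_2 -> 'M[R]_2.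
Hypothesis hsym : forall x, (h x)^T = h x.
Hypothesis hunit : forall x, h x \in unitmx.
Hypothesis hder : forall (a b c : 'I_2) x, derivable (fun q => h q a b) x (ev c).
Notation o := (lshift 2 (ord0 : 'I_1)).
Notation r := (rshift 1).
Notation G := (cone_metric h).
Variable X : 'rV[R]_(1+2).
Hypothesis tX : 0 < cone_t X.
Let t0 : cone_t X != 0. Proof. by rewrite gt_eqF. Qed.
Definition CG := locked (christ G).
Lemma lockE : christ G = CG. Proof. by rewrite /CG -lock. Qed.

Let c_ooo : CG o o o X = 0. Proof. by rewrite -lockE; apply: chr_ooo. Qed.
Let c_oor b : CG o o (r b) X = 0. Proof. by rewrite -lockE; apply: chr_oor. Qed.
Let c_oro a : CG o (r a) o X = 0. Proof. by rewrite -lockE; apply: chr_oro. Qed.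
Let c_orr a b : CG o (r a) (r b) X = - (cone_t X * h (rsubmx X) a b).
Proof. by rewrite -lockE; apply: chr_orr. Qed.
Let c_roo c : CG (r c) o o X = 0. Proof. by rewrite -lockE; apply: chr_roo. Qed.
Let c_ror c b : CG (r c) o (r b) X = (cone_t X)^-1 * (c == b)%:R.
Proof. by rewrite -lockE; apply: chr_ror. Qed.
Let c_rro c a : CG (r c) (r a) o X = (cone_t X)^-1 * (c == a)%:R.
Proof. by rewrite -lockE; apply: chr_rro. Qed.
Let c_rrr c a b : CG (r c) (r a) (r b) X = christ h c a b (rsubmx X).
Proof. by rewrite -lockE; apply: chr_rrr. Qed.

Let p_ooo i : pd i (CG o o o) X = 0. Proof. by rewrite -lockE; apply: pdc_ooo. Qed.
Let p_oor i b : pd i (CG o o (r b)) X = 0. Proof. by rewrite -lockE; apply: pdc_oor. Qed.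
Let p_oro i a : pd i (CG o (r a) o) X = 0. Proof. by rewrite -lockE; apply: pdc_oro. Qed.
Let p_roo i c : pd i (CG (r c) o o) X = 0. Proof. by rewrite -lockE; apply: pdc_roo. Qed.
Let p_orr_o a b : pd o (CG o (r a) (r b)) X = - h (rsubmx X) a b.
Proof. by rewrite -lockE; apply: pdc_orr_o. Qed.
Let p_orr_r c a b : pd (r c) (CG o (r a) (r b)) X =
  - cone_t X * pd c (fun q => h q a b) (rsubmx X).
Proof. by rewrite -lockE; apply: pdc_orr_r. Qed.
Let p_ror_o c b : pd o (CG (r c) o (r b)) X = - (cone_t X)^-2 * (c == b)%:R.
Proof. by rewrite -lockE; apply: pdc_ror_o. Qed.
Let p_ror_r d c b : pd (r d) (CG (r c) o (r b)) X = 0.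
Proof. by rewrite -lockE; apply: pdc_ror_r. Qed.
Let p_rro_o c a : pd o (CG (r c) (r a) o) X = - (cone_t X)^-2 * (c == a)%:R.
Proof. by rewrite -lockE; apply: pdc_rro_o. Qed.
Let p_rro_r d c a : pd (r d) (CG (r c) (r a) o) X = 0.
Proof. by rewrite -lockE; apply: pdc_rro_r. Qed.
Let p_rrr_o c a b : pd o (CG (r c) (r a) (r b)) X = 0.
Proof. by rewrite -lockE; apply: pdc_rrr_o. Qed.
Let p_rrr_r d c a b : pd (r d) (CG (r c) (r a) (r b)) X =
  pd d (christ h c a b) (rsubmx X).
Proof. by rewrite -lockE; apply: pdc_rrr_r. Qed.

Lemma ord2P (a : 'I_2) : a = 0 \/ a = 1.
Proof. by case: a => [[|[|//]] ?]; [left|right]; apply: val_inj. Qed.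
Lemma e01 : ((0 : 'I_2) == 1) = false. Proof. by []. Qed.
Lemma e10 : ((1 : 'I_2) == 0) = false. Proof. by []. Qed.
Lemma e00 : ((0 : 'I_2) == 0) = true. Proof. by []. Qed.
Lemma e11 : ((1 : 'I_2) == 1) = true. Proof. by []. Qed.

Lemma pdh_sym l a b p : pd l (fun q => h q a b) p = pd l (fun q => h q b a) p.
Proof. by congr pd; apply/funext => q; rewrite hs. Qed.

Lemma chr_h_sym c a b p : christ h c a b p = christ h c b a p.
Proof.
rewrite /christ; congr (_ * _); apply: eq_bigr => l _.
rewrite (pdh_sym l a b); congr (_ * _); ring.
Qed.

Lemma chr_low a b c p : \sum_(e < 2) h p a e * christ h e b c p =
  2^-1 * (pd b (fun q => h q a c) p + pd c (fun q => h q a b) p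
          - pd a (fun q => h q b c) p).
Proof.
rewrite /christ.
under eq_bigr => e _ do rewrite mulrCA mulr_sumr.
rewrite -mulr_sumr exchange_big /=; congr (_ * _).
under eq_bigr => l _ do under eq_bigr => e _ do rewrite mulrA.
under eq_bigr => l _ do rewrite -mulr_suml Hhi //.
by rewrite sum_delta.
Qed.


Ltac crw := rewrite /Rup sum3 lockE ?p_ooo ?p_oor ?p_oro ?p_roo ?p_orr_o ?p_orr_r ?p_ror_o
  ?p_ror_r ?p_rro_o ?p_rro_r ?p_rrr_o ?p_rrr_r
  ?c_ooo ?c_oor ?c_oro ?c_orr ?c_roo ?c_ror ?c_rro ?c_rrr;
  under eq_bigr => e _ do rewrite ?c_ooo ?c_oor ?c_oro ?c_orr ?c_roo ?c_ror ?c_rro ?c_rrr.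
Ltac ev2 := rewrite /= ?e00 ?e01 ?e10 ?e11.

Lemma R1 a : Rup G o o (r a) o X = 0.
Proof. crw; rewrite !sum2; ring. Qed.

Lemma R2 a b : Rup G o o (r a) (r b) X = 0.
Proof. crw; rewrite !sum2; case: (ord2P b) => ->; ev2; by field. Qed.

Lemma R3 a b : Rup G o (r a) (r b) o X = 0.
Proof.
crw; rewrite !sum2; case: (ord2P a) => ->; case: (ord2P b) => ->; ev2; rewrite ?(hs hsym _ 1 0); by field.
Qed.

Lemma R5 d a : Rup G (r d) o (r a) o X = 0.
Proof. crw; rewrite !sum2; case: (ord2P a) => ->; case: (ord2P d) => ->; ev2; by field. Qed.

Lemma R6 d a b : Rup G (r d) o (r a) (r b) X = 0.
Proof. crw; rewrite !sum2; case: (ord2P b) => ->; case: (ord2P d) => ->; ev2; by field. Qed.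

Lemma R7 d a b : Rup G (r d) (r a) (r b) o X = 0.
Proof.
crw; rewrite !sum2; case: (ord2P a) => ->; case: (ord2P b) => ->; ev2;
  rewrite ?(chr_h_sym _ 1 0); by field.
Qed.

Lemma R8 d a b c : Rup G (r d) (r a) (r b) (r c) X =
  Rup h d a b c (rsubmx X) - h (rsubmx X) b c * (d == a)%:R
  + h (rsubmx X) a c * (d == b)%:R.
Proof. crw; rewrite /Rup; by field. Qed.

Lemma R4 a b c : Rup G o (r a) (r b) (r c) X = 0.
Proof.
crw.
set t := cone_t X; set p := rsubmx X.
have -> : \sum_(e < 2) (christ h e b c p * - (t * h p a e) - christ h e a c p * - (t * h p b e))
  = - t * \sum_(e < 2) h p a e * christ h e b c p + t * \sum_(e < 2) h p b e * christ h e a c p.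
  by rewrite !sum2; ring.
rewrite !chr_low (pdh_sym c b a p); by field.
Qed.



End RupC.


Section RlowC.
Variable R : realType.
Variable h : 'rV[R]_2 -> 'M[R]_2.
Hypothesis hsym : forall x, (h x)^T = h x.
Hypothesis hunit : forall x, h x \in unitmx.
Hypothesis hder : forall (a b c : 'I_2) x, derivable (fun q => h q a b) x (ev c).
Notation o := (lshift 2 (ord0 : 'I_1)).
Notation r := (rshift 1).
Notation G := (cone_metric h).
Variable X : 'rV[R]_(1+2).
Hypothesis tX : 0 < cone_t X.

Let R1 a : Rup G o o (r a) o X = 0. Proof. by apply: R1. Qed.
Let R2 a b : Rup G o o (r a) (r b) X = 0. Proof. by apply: R2. Qed.
Let R3 a b : Rup G o (r a) (r b) o X = 0. Proof. by apply: R3. Qed.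
Let R4 a b c : Rup G o (r a) (r b) (r c) X = 0. Proof. by apply: R4. Qed.
Let R5 d a : Rup G (r d) o (r a) o X = 0. Proof. by apply: R5. Qed.
Let R6 d a b : Rup G (r d) o (r a) (r b) X = 0. Proof. by apply: R6. Qed.
Let R7 d a b : Rup G (r d) (r a) (r b) o X = 0. Proof. by apply: R7. Qed.
Let R8 d a b c : Rup G (r d) (r a) (r b) (r c) X =
  Rup h d a b c (rsubmx X) - h (rsubmx X) b c * (d == a)%:R
  + h (rsubmx X) a c * (d == b)%:R.
Proof. by apply: R8. Qed.
Ltac ev2 := rewrite /= ?e00 ?e01 ?e10 ?e11.

Lemma gen4 (A B C D : R) : A - B + (C - D) = - (B - A + (D - C)).
Proof. ring. Qed.

Lemma RupA m i j k : Rup G m i j k X = - Rup G m j i k X.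
Proof. by rewrite /Rup !(lockE h) !sumrB gen4. Qed.

Lemma Rup_ii m i k : Rup G m i i k X = 0.
Proof. by rewrite /Rup !(lockE h) !sumrB !subrr addr0. Qed.

Lemma Rup0o i j k : Rup G o i j k X = 0.
Proof.
case: (ord3P i) => [->|[a ->]].
  case: (ord3P j) => [->|[b ->]]; first exact: (@Rup_ii o o k).
  case: (ord3P k) => [->|[c ->]]; [exact: (R1 b) | exact: (R2 b c)].
case: (ord3P j) => [->|[b ->]].
  rewrite (@RupA o (r a) o k).
  case: (ord3P k) => [->|[c ->]]; [by rewrite (R1 a) oppr0 | by rewrite (R2 a c) oppr0].
case: (ord3P k) => [->|[c ->]]; [exact: (R3 a b) | exact: (R4 a b c)].
Qed.

Lemma Rup0r d i j k : (i == o) || (j == o) || (k == o) ->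
  Rup G (r d) i j k X = 0.
Proof.
case: (ord3P i) => [->|[a ->]].
  case: (ord3P j) => [->|[b ->]]; first by move=> _; exact: (@Rup_ii (r d) o k).
  case: (ord3P k) => [->|[c ->]] _; [exact: (R5 d b) | exact: (R6 d b c)].
case: (ord3P j) => [->|[b ->]].
  rewrite (@RupA (r d) (r a) o k) => _.
  case: (ord3P k) => [->|[c ->]]; [by rewrite (R5 d a) oppr0 | by rewrite (R6 d a c) oppr0].
case: (ord3P k) => [->|[c ->]]; first by move=> _; exact: (R7 d a b).
by rewrite !ro_neq.
Qed.

Lemma Rup0 m i j k : (m == o) || (i == o) || (j == o) || (k == o) ->
  Rup G m i j k X = 0.
Proof.
case: (ord3P m) => [->|[d ->]] H; first exact: (@Rup0o i j k).
by apply: (@Rup0r d i j k); move: H; rewrite ro_neq.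
Qed.

Lemma Rlow0 i j k w : (i == o) || (j == o) || (k == o) || (w == o) ->
  Rlow G i j k w X = 0.
Proof.
rewrite /Rlow sum3.
case: (ord3P w) => [->|[e ->]] H.
  rewrite G_oo mul1r Rup0 ?eqxx // add0r big1 // => d _.
  by rewrite G_ro mul0r.
rewrite G_or mul0r add0r big1 // => d _.
rewrite Rup0 ?mulr0 //.
by move: H; rewrite !ro_neq orbF.
Qed.

Lemma Rlow_rrrr a b c e : Rlow G (r a) (r b) (r c) (r e) X =
  cone_t X ^+ 2 * (Rlow h a b c e (rsubmx X) - h (rsubmx X) b c * h (rsubmx X) a e
                   + h (rsubmx X) a c * h (rsubmx X) b e).
Proof.
rewrite /Rlow sum3 G_or mul0r add0r.
under eq_bigr => d _ do rewrite G_rr R8.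
rewrite !sum2; move: (Rup h) => RH.
case: (ord2P a) => ->; case: (ord2P b) => ->; ev2; ring.
Qed.


End RlowC.


Lemma curv_ev1 (R : realType) n (G : 'rV[R]_n -> 'M[R]_n) x (i : 'I_n) Y Z W :
  curv G x (ev i) Y Z W =
  \sum_(j < n) \sum_(k < n) \sum_(l < n) Y 0 j * Z 0 k * W 0 l * Rlow G i j k l x.
Proof.
rewrite /curv (@sum_only _ _ i); last first.
  move=> a /negbTE ai; apply: big1 => b _; apply: big1 => c _; apply: big1 => d _.
  by rewrite evE eq_sym ai !mul0r.
apply: eq_bigr => j _; apply: eq_bigr => k _; apply: eq_bigr => l _.
by rewrite !evE !eqxx !mul1r.
Qed.

Section Fin.
Variable R : realType.
Variables (J h : 'rV[R]_2 -> 'M[R]_2) (k' : R).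
Hypothesis hsym : forall x, (h x)^T = h x.
Hypothesis hunit : forall x, h x \in unitmx.
Hypothesis hder : forall (a b c : 'I_2) x, derivable (fun q => h q a b) x (ev c).
Hypothesis hcurv : constant_sectional_curvature h k'.
Notation o := (lshift 2 (ord0 : 'I_1)).
Notation r := (rshift 1).
Notation G := (cone_metric h).
Variable X : 'rV[R]_(1+2).
Hypothesis tX : 0 < cone_t X.
Let t0 : cone_t X != 0. Proof. by rewrite gt_eqF. Qed.
Notation p := (rsubmx X).
Notation t := (cone_t X).

Definition Kv (a b c e : 'I_2) :=
  t ^+ 2 * (k' - 1) * (h p b c * h p a e - h p a c * h p b e).

Lemma Rlow_h a b c e x : Rlow h a b c e x = k' * (h x b c * h x a e - h x a c * h x b e).
Proof. by rewrite -curv_ev hcurv !metric_ev. Qed.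

Lemma RLv a b c e : Rlow G (r a) (r b) (r c) (r e) X = Kv a b c e.
Proof. rewrite Rlow_rrrr // Rlow_h /Kv; ring. Qed.

Lemma sum3z (F : 'I_(1+2) -> R) : F o = 0 -> \sum_(l < 1+2) F l = \sum_(a < 2) F (r a).
Proof. by move=> H; rewrite sum3 H add0r. Qed.

Lemma curvH3 c a W Z : curv G X (ev (r c)) (ev (r a)) W Z =
  \sum_(c' < 2) \sum_(e < 2) W 0 (r c') * Z 0 (r e) * Kv c a c' e.
Proof.
rewrite curv_ev2 sum3z; last first.
  by apply: big1 => l _; rewrite (@Rlow0 _ _ hsym hunit hder X tX) ?eqxx ?orbT // mulr0.
apply: eq_bigr => c' _; rewrite sum3z; last first.
  by rewrite (@Rlow0 _ _ hsym hunit hder X tX) ?eqxx ?orbT // mulr0.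
by apply: eq_bigr => e _; rewrite RLv.
Qed.


Let Rl0 i j k w : (i == o) || (j == o) || (k == o) || (w == o) -> Rlow G i j k w X = 0.
Proof. by apply: Rlow0. Qed.

Lemma curvH4 U V W Z : curv G X U V W Z =
  \sum_(a < 2) \sum_(b < 2) \sum_(c < 2) \sum_(e < 2)
    U 0 (r a) * V 0 (r b) * W 0 (r c) * Z 0 (r e) * Kv a b c e.
Proof.
rewrite /curv sum3z; last first.
  apply: big1 => j _; apply: big1 => k _; apply: big1 => l _.
  by rewrite Rl0 ?eqxx // mulr0.
apply: eq_bigr => a _; rewrite sum3z; last first.
  apply: big1 => k _; apply: big1 => l _.
  by rewrite Rl0 ?eqxx ?orbT // mulr0.
apply: eq_bigr => b _; rewrite sum3z; last first.
  apply: big1 => l _.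
  by rewrite Rl0 ?eqxx ?orbT // mulr0.
apply: eq_bigr => c _; rewrite sum3z; last first.
  by rewrite Rl0 ?eqxx ?orbT // mulr0.
by apply: eq_bigr => e _; rewrite RLv.
Qed.

Lemma curv_o1 V W Z : curv G X (ev o) V W Z = 0.
Proof.
rewrite curv_ev1; apply: big1 => j _; apply: big1 => k _; apply: big1 => l _.
by rewrite Rl0 ?eqxx // mulr0.
Qed.

Lemma curv_o2 c W Z : curv G X (ev (r c)) (ev o) W Z = 0.
Proof.
rewrite curv_ev2; apply: big1 => k _; apply: big1 => l _.
by rewrite Rl0 ?eqxx ?orbT // mulr0.
Qed.

Definition GI := locked (invmx (G X)).
Lemma GIE : invmx (G X) = GI. Proof. by rewrite /GI -lock. Qed.
Lemma GI_oo : GI o o = 1. Proof. by rewrite -GIE Gi_oo. Qed.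
Lemma GI_or a : GI o (r a) = 0. Proof. by rewrite -GIE Gi_or. Qed.
Lemma GI_ro a : GI (r a) o = 0. Proof. by rewrite -GIE Gi_ro. Qed.
Lemma GI_rr a b : GI (r a) (r b) = t^-2 * invmx (h p) a b. Proof. by rewrite -GIE Gi_rr. Qed.

Definition PH := locked (cone_phi J X).
Lemma PHE : cone_phi J X = PH. Proof. by rewrite /PH -lock. Qed.
Lemma PH_ro a : PH (r a) o = 0.
Proof. by rewrite -PHE /cone_phi block_mxEdl mxE. Qed.
Lemma PH_rr a b : PH (r a) (r b) = J p a b.
Proof. by rewrite -PHE /cone_phi block_mxEdr. Qed.

Lemma ricci_starH Y Z : ricci_star G (cone_phi J) X Y Z =
  \sum_(c < 2) \sum_(d < 2) GI (r c) (r d) *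
     curv G X (ev (r c)) Y Z (phiv PH (ev (r d))).
Proof.
rewrite /ricci_star GIE PHE sum3z; last first.
  by apply: big1 => l _; rewrite -PHE curv_o1 mulr0.
apply: eq_bigr => c _; rewrite sum3z //.
by rewrite GI_ro mul0r.
Qed.

Lemma ricciH Y Z : ricci G X Y Z =
  \sum_(c < 2) \sum_(d < 2) GI (r c) (r d) * curv G X (ev (r c)) Y Z (ev (r d)).
Proof.
rewrite /ricci GIE sum3z; last first.
  by apply: big1 => l _; rewrite curv_o1 mulr0.
apply: eq_bigr => c _; rewrite sum3z //.
by rewrite GI_ro mul0r.
Qed.

Lemma rs_o Z : ricci_star G (cone_phi J) X (ev o) Z = 0.
Proof. by rewrite ricci_starH; apply: big1 => c _; apply: big1 => d _; rewrite curv_o2 mulr0. Qed.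

Lemma ric_o Z : ricci G X (ev o) Z = 0.
Proof. by rewrite ricciH; apply: big1 => c _; apply: big1 => d _; rewrite curv_o2 mulr0. Qed.

Lemma tau_starH : tau_star G (cone_phi J) X =
  \sum_(a < 2) \sum_(b < 2) GI (r a) (r b) * ricci_star G (cone_phi J) X (ev (r a)) (ev (r b)).
Proof.
rewrite /tau_star GIE sum3z; last first.
  by apply: big1 => j _; rewrite rs_o mulr0.
apply: eq_bigr => a _; rewrite sum3z //.
by rewrite GI_ro mul0r.
Qed.

Lemma tau_star2H : tau_star2 G (cone_phi J) X =
  \sum_(a < 2) \sum_(b < 2) GI (r a) (r b) *
     ricci_star G (cone_phi J) X (ev (r a)) (phiv PH (ev (r b))).
Proof.
rewrite /tau_star2 GIE PHE sum3z; last first.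
  by apply: big1 => j _; rewrite rs_o mulr0.
apply: eq_bigr => a _; rewrite sum3z //.
by rewrite GI_ro mul0r.
Qed.

Lemma scal_tauH : scal_tau G X =
  \sum_(a < 2) \sum_(b < 2) GI (r a) (r b) * ricci G X (ev (r a)) (ev (r b)).
Proof.
rewrite /scal_tau GIE sum3z; last first.
  by apply: big1 => j _; rewrite ric_o mulr0.
apply: eq_bigr => a _; rewrite sum3z //.
by rewrite GI_ro mul0r.
Qed.

End Fin.


Section Alg.
Variable R : realType.
Variable M : 'M[R]_2.
Hypothesis Mu : M \in unitmx.
Let d := M 0 0 * M 1 1 - M 0 1 * M 1 0.

Lemma inv_eqs : let N := invmx M in
  [/\ N 0 0 * M 0 0 + N 0 1 * M 1 0 = 1, N 0 0 * M 0 1 + N 0 1 * M 1 1 = 0,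
      N 1 0 * M 0 0 + N 1 1 * M 1 0 = 0 & N 1 0 * M 0 1 + N 1 1 * M 1 1 = 1].
Proof.
move=> N; have := mulVmx Mu; move/matrixP => E.
have E00 := E 0 0; have E01 := E 0 1; have E10 := E 1 0; have E11 := E 1 1.
rewrite !mxE !sum2 /= in E00 E01 E10 E11.
by split.
Qed.

Lemma det2_neq0 : d != 0.
Proof.
have [e1 e2 e3 e4] := inv_eqs; set N := invmx M in e1 e2 e3 e4.
have : d * (N 0 0 * N 1 1 - N 0 1 * N 1 0) = 1.
  have -> : d * (N 0 0 * N 1 1 - N 0 1 * N 1 0) =
    (N 0 0 * M 0 0 + N 0 1 * M 1 0) * (N 1 0 * M 0 1 + N 1 1 * M 1 1)
    - (N 0 0 * M 0 1 + N 0 1 * M 1 1) * (N 1 0 * M 0 0 + N 1 1 * M 1 0).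
    by rewrite /d; ring.
  by rewrite e1 e2 e3 e4; ring.
by move=> H; apply/eqP => d0; move: H; rewrite d0 mul0r => /eqP; rewrite eq_sym oner_eq0.
Qed.

Lemma inv2 : [/\ invmx M 0 0 = M 1 1 / d, invmx M 0 1 = - M 0 1 / d,
  invmx M 1 0 = - M 1 0 / d & invmx M 1 1 = M 0 0 / d].
Proof.
have [e1 e2 e3 e4] := inv_eqs; set N := invmx M in e1 e2 e3 e4 *.
have dn := det2_neq0.
split; apply: (mulIf dn); rewrite mulfVK //.
- have -> : N 0 0 * d = M 1 1 * (N 0 0 * M 0 0 + N 0 1 * M 1 0)
          - M 1 0 * (N 0 0 * M 0 1 + N 0 1 * M 1 1) by rewrite /d; ring.
  by rewrite e1 e2; ring.
- have -> : N 0 1 * d = M 0 0 * (N 0 0 * M 0 1 + N 0 1 * M 1 1)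
          - M 0 1 * (N 0 0 * M 0 0 + N 0 1 * M 1 0) by rewrite /d; ring.
  by rewrite e1 e2; ring.
- have -> : N 1 0 * d = M 1 1 * (N 1 0 * M 0 0 + N 1 1 * M 1 0)
          - M 1 0 * (N 1 0 * M 0 1 + N 1 1 * M 1 1) by rewrite /d; ring.
  by rewrite e3 e4; ring.
- have -> : N 1 1 * d = M 0 0 * (N 1 0 * M 0 1 + N 1 1 * M 1 1)
          - M 0 1 * (N 1 0 * M 0 0 + N 1 1 * M 1 0) by rewrite /d; ring.
  by rewrite e3 e4; ring.
Qed.

End Alg.

Section JAlg.
Variable R : realType.
Variable N : 'M[R]_2.
Hypothesis NN : N *m N = - 1%:M.

Lemma J_facts : [/\ N 1 1 = - N 0 0, N 0 1 != 0 & N 1 0 = (-1 - N 0 0 ^+ 2) / N 0 1].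
Proof.
move/matrixP: NN => E.
have E00 := E 0 0; have E01 := E 0 1.
rewrite !mxE !sum2 /= in E00 E01.
have sq := sqr_ge0 (N 0 0).
have n01 : N 0 1 != 0.
  apply/eqP => z; rewrite z mul0r addr0 in E00.
  move: sq E00; rewrite expr2 /=; lra.
split => //.
- have : N 0 1 * (N 0 0 + N 1 1) = 0 by rewrite -[RHS]oppr0 -E01; ring.
  move/eqP; rewrite mulf_eq0 (negbTE n01) /= => /eqP H; lra.
- apply: (mulIf n01); rewrite mulfVK // [N 1 0 * _]mulrC expr2; lra.
Qed.

End JAlg.


Section Fin2.
Variable R : realType.
Variables (J h : 'rV[R]_2 -> 'M[R]_2) (k' : R).
Hypothesis hsym : forall x, (h x)^T = h x.
Hypothesis hunit : forall x, h x \in unitmx.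
Hypothesis hder : forall (a b c : 'I_2) x, derivable (fun q => h q a b) x (ev c).
Hypothesis hcurv : constant_sectional_curvature h k'.
Hypothesis Jsq : forall x, J x *m J x = - 1%:M.
Notation o := (lshift 2 (ord0 : 'I_1)).
Notation r := (rshift 1).
Notation G := (cone_metric h).
Variable X : 'rV[R]_(1+2).
Hypothesis tX : 0 < cone_t X.
Let t0 : cone_t X != 0. Proof. by rewrite gt_eqF. Qed.

Let tauH := tau_starH J hsym hunit hder tX.
Let rsH := ricci_starH J hsym hunit hder tX.
Let c3 := curvH3 hsym hunit hder hcurv tX.
Let GIrr := GI_rr hunit tX.
Let PHrr := PH_rr J X.

Lemma T1 : tau_star G (cone_phi J) X = 0.
Proof.
rewrite tauH !sum2 !rsH !sum2 !c3 !sum2.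
rewrite !evE !rr_eq !phiv_ev !PHrr !GIrr /Kv /= ?e00 ?e01 ?e10 ?e11.
have [i00 i01 i10 i11] := inv2 (hunit (rsubmx X)).
have dn := det2_neq0 (hunit (rsubmx X)).
have [j11 j01 j10] := J_facts (Jsq (rsubmx X)).
rewrite i00 i01 i10 i11 j11 j10 !(hs hsym _ 1 0) in dn *.
field; by rewrite dn t0 j01.
Qed.


Let tau2H := tau_star2H J hsym hunit hder tX.
Let stH := scal_tauH hsym hunit hder tX.
Let ricH := ricciH hsym hunit hder tX.
Let c4 := curvH4 hsym hunit hder hcurv tX.

Lemma T2 : tau_star2 G (cone_phi J) X = scal_tau G X.
Proof.
rewrite tau2H stH !sum2 !rsH !ricH !sum2 !c3 !sum2.
rewrite !evE !rr_eq !phiv_ev !PHrr !GIrr /Kv /= ?e00 ?e01 ?e10 ?e11.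
have [i00 i01 i10 i11] := inv2 (hunit (rsubmx X)).
have dn := det2_neq0 (hunit (rsubmx X)).
have [j11 j01 j10] := J_facts (Jsq (rsubmx X)).
rewrite i00 i01 i10 i11 j11 j10 !(hs hsym _ 1 0) in dn *.
field; by rewrite dn t0 j01.
Qed.

Lemma P1 u v : (exists a b : R, cone_xi = a *: u + b *: v) -> curv G X u v v u = 0.
Proof.
case=> al [be] Hx.
have x0 : al * u 0 o + be * v 0 o = 1.
  have := congr1 (fun M : 'rV[R]_(1+2) => M 0 o) Hx.
  by rewrite /= /cone_xi row_mxEl !mxE.
have x1 : forall a, al * u 0 (r a) + be * v 0 (r a) = 0.
  move=> a; have := congr1 (fun M : 'rV[R]_(1+2) => M 0 (r a)) Hx.
  by rewrite /= /cone_xi row_mxEr !mxE.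
have e0 := x1 0; have e1 := x1 1.
rewrite c4 !sum2 /Kv !(hs hsym _ 1 0).
set u0 := u 0 (r 0) in e0 e1 *; set u1 := u 0 (r 1) in e0 e1 *.
set v0 := v 0 (r 0) in e0 e1 *; set v1 := v 0 (r 1) in e0 e1 *.
have A : al * (u0 * v1 - u1 * v0) = 0.
  transitivity (v1 * (al * u0 + be * v0) - v0 * (al * u1 + be * v1)); first ring.
  by rewrite e0 e1; ring.
have B : be * (u0 * v1 - u1 * v0) = 0.
  transitivity (u0 * (al * u1 + be * v1) - u1 * (al * u0 + be * v0)); first ring.
  by rewrite e0 e1; ring.
have w0 : u0 * v1 - u1 * v0 = 0.
  have [al0|aln0] := eqVneq al 0.
    have ben : be != 0.
      by apply/eqP => b0; move: x0; rewrite al0 b0 !mul0r addr0 => /eqP; rewrite eq_sym oner_eq0.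
    by move/eqP: B; rewrite mulf_eq0 (negbTE ben) /= => /eqP.
  by move/eqP: A; rewrite mulf_eq0 (negbTE aln0) /= => /eqP.
set H0 := h (rsubmx X).
transitivity (cone_t X ^+ 2 * (k' - 1) * (H0 0 0 * H0 1 1 - H0 0 1 * H0 0 1)
  * (u0 * v1 - u1 * v0) ^+ 2); first ring.
by rewrite w0; ring.
Qed.

End Fin2.

Unset Implicit Arguments.
Set Strict Implicit.
Theorem proposition3p5 (R : realType) (J h : 'rV[R]_2 -> 'M[R]_2) (k' : R) :
  almost_norden J h ->
  constant_sectional_curvature h k' ->
  [/\ (forall (X : 'rV[R]_(1 + 2)) (u v : 'rV[R]_(1 + 2)),
         0 < cone_t X ->
         (exists a b : R, cone_xi = a *: u + b *: v) ->
         metric (cone_metric h) X u v = 0 ->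
         metric (cone_metric h) X u u * metric (cone_metric h) X v v != 0 ->
         sectional (cone_metric h) X u v = 0),
      (forall X : 'rV[R]_(1 + 2), 0 < cone_t X ->
         tau_star (cone_metric h) (cone_phi J) X = 0) &
      (forall X : 'rV[R]_(1 + 2), 0 < cone_t X ->
         tau_star2 (cone_metric h) (cone_phi J) X = scal_tau (cone_metric h) X)].
Proof.
move=> [_ [hsm [Jsq [hsym [hunit _]]]]] hcurv.
have hder : forall (a b c : 'I_2) x, derivable (fun q => h q a b) x (ev c).
  by move=> a b c x; have [_ /(_ c) [D _]] := hsm a b 1%N; exact: D.
split.
- move=> X u v tX xi _ _.
  by rewrite /sectional (P1 hsym hunit hder hcurv tX xi) mul0r.
- by move=> X tX; apply: (T1 hsym hunit hder hcurv Jsq tX).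
- by move=> X tX; apply: (T2 hsym hunit hder hcurv Jsq tX).
Qed.
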